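(* Let $M$ be a multigraph with $n$ vertices. Then $M$ is the double competition multigraph of a loopless digraph if and only if there exist an ordering $(v_1,\ldots,v_n)$ of the vertices of $M$ and a double indexed edge clique partition $\{S_{ij}\mid i,j\in[n]\}$ of $M$ such that the following conditions hold: (I) for any $i,j\in[n]$, if $|A_i\cap B_j|\ge 2$, then $A_i\cap B_j=S_{ij}$; (II) for any $i,j\in[n]$, $v_i\notin S_{ij}$ and $v_j\notin S_{ij}$, where $A_i = S_{i*}\cup T^+_i$, $S_{i*} := \bigcup_{p\in[n]} S_{ip}$, $T^+_i := \{v_b \mid a,b\in[n],\ v_i\in S_{ab}\}$, and $B_j = S_{*j}\cup T^-_j$, $S_{*j} := \bigcup_{q\in[n]} S_{qj}$, $T^-_j := \{v_a \mid a,b\in[n],\ v_j\in S_{ab}\}$.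
   Context: A digraph $D$ is a pair $(V(D),A(D))$ with $A(D)$ a set of ordered pairs of vertices (arcs); an arc $(v,v)$ is a loop, and $D$ is loopless if it has no loops. $N^+_D(x)=\{v\mid (x,v)\in A(D)\}$ and $N^-_D(x)=\{v\mid (v,x)\in A(D)\}$. A multigraph $M$ (without loops) is a vertex set $V(M)$ together with a function $m_M$ assigning to each unordered pair $\{x,y\}$ of distinct vertices a nonnegative integer, the number of edges between $x$ and $y$. The double competition multigraph of a digraph $D$ is the multigraph $M$ with $V(M)=V(D)$ and $m_M(\{x,y\}) = |N^+_D(x)\cap N^+_D(y)|\cdot|N^-_D(x)\cap N^-_D(y)|$ for distinct $x,y$. A clique of $M$ is a set of vertices that are pairwise adjacent (i.e. $m_M\ge 1$ on every pair of distinct elements); the empty set and singletons count as cliques. An edge clique partition of $M$ is a family (multiset) $\mathcal{F}$ of cliques of $M$ such that any two distinct vertices $x,y$ are contained in exactly $m_M(\{x,y\})$ members of $\mathcal{F}$; a double indexed edge clique partition $\{S_{ij}\mid i,j\in[n]\}$ is such a family indexed by pairs $(i,j)\in[n]\times[n]$ (members may be empty). $[n]=\{1,\ldots,n\}$. *)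

(* Defs.v *)
From mathcomp Require Import all_boot.
Set Implicit Arguments. Unset Strict Implicit. Unset Printing Implicit Defensive.

(* A multigraph on the finite vertex type V: a function on unordered pairs,
   represented as 2-element sets [set x; y] (values on other sets are ignored). *)
Definition multigraph (V : finType) := {set V} -> nat.

Definition digraph (V : finType) := rel V.

Definition loopless (V : finType) (D : digraph V) : Prop := forall x, ~~ D x x.

Definition outN (V : finType) (D : digraph V) (x : V) : {set V} := [set v | D x v].
Definition inN  (V : finType) (D : digraph V) (x : V) : {set V} := [set v | D v x].

Definition is_dcm (V : finType) (D : digraph V) (M : multigraph V) : Prop :=
  forall x y : V, x != y ->
    M [set x; y] = #|outN D x :&: outN D y| * #|inN D x :&: inN D y|.

Definition is_clique (V : finType) (M : multigraph V) (C : {set V}) : Prop :=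
  forall x y, x \in C -> y \in C -> x != y -> 1 <= M [set x; y].

Definition dieCP (V : finType) (n : nat) (M : multigraph V)
    (S : 'I_n -> 'I_n -> {set V}) : Prop :=
  (forall i j, is_clique M (S i j)) /\
  (forall x y : V, x != y ->
     #|[set p : 'I_n * 'I_n | (x \in S p.1 p.2) && (y \in S p.1 p.2)]| = M [set x; y]).

Section AB.
Variables (V : finType) (n : nat) (v : 'I_n -> V) (S : 'I_n -> 'I_n -> {set V}).

Definition Srow (i : 'I_n) : {set V} := \bigcup_(p < n) S i p.
Definition Scol (j : 'I_n) : {set V} := \bigcup_(q < n) S q j.
Definition Tplus (i : 'I_n) : {set V} :=
  [set v b | b : 'I_n & [exists a : 'I_n, v i \in S a b]].
Definition Tminus (j : 'I_n) : {set V} :=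
  [set v a | a : 'I_n & [exists b : 'I_n, v j \in S a b]].
Definition Aset (i : 'I_n) : {set V} := Srow i :|: Tplus i.
Definition Bset (j : 'I_n) : {set V} := Scol j :|: Tminus j.
End AB.

(* Main.v *)
Require Import Defs.
From mathcomp Require Import all_boot.

Lemma card_bij_pre (V : finType) (n : nat) (v : 'I_n -> V) (P : pred V) :
  bijective v -> #|[set z | P z]| = #|[set i | P (v i)]|.
Proof.
move=> bv; have vinj := bij_inj bv.
rewrite -(card_imset _ vinj); apply: eq_card => z.
case: bv => w vw wv.
apply/idP/imsetP => [|[i]]; rewrite !inE.
  by move=> Pz; exists (w z); rewrite ?inE wv.
by move=> Pi ->.
Qed.

Lemma AB_sym (V : finType) (n : nat) (v : 'I_n -> V) (S : 'I_n -> 'I_n -> {set V}) a b :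
  injective v -> (v a \in Aset v S b) = (v b \in Bset v S a).
Proof.
move=> vinj; rewrite /Aset /Bset /Srow /Scol /Tplus /Tminus !inE.
apply/idP/idP.
- case/orP => [/bigcupP [p _ H]|/imsetP [c]].
    apply/orP; right; apply/imsetP; exists b => //; rewrite inE.
    by apply/existsP; exists p.
  rewrite inE => /existsP [a' H] /vinj ->.
  by apply/orP; left; apply/bigcupP; exists a'.
- case/orP => [/bigcupP [q _ H]|/imsetP [c]].
    apply/orP; right; apply/imsetP; exists a => //; rewrite inE.
    by apply/existsP; exists q.
  rewrite inE => /existsP [b' H] /vinj ->.
  by apply/orP; left; apply/bigcupP; exists b'.
Qed.

Lemma S_sub_AB (V : finType) (n : nat) (v : 'I_n -> V) (S : 'I_n -> 'I_n -> {set V}) i j :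
  S i j \subset Aset v S i :&: Bset v S j.
Proof.
apply/subsetP => z zS; rewrite !inE /Srow /Scol.
by apply/andP; split; apply/orP; left; apply/bigcupP; [exists j|exists i].
Qed.

Theorem theorem2 (V : finType) (n : nat) (hn : #|V| = n) (M : multigraph V) :
  (exists D : digraph V, loopless D /\ is_dcm D M) <->
  (exists v : 'I_n -> V, bijective v /\
     exists S : 'I_n -> 'I_n -> {set V},
       dieCP M S /\
       (forall i j : 'I_n, 2 <= #|Aset v S i :&: Bset v S j| ->
          Aset v S i :&: Bset v S j = S i j) /\
       (forall i j : 'I_n, v i \notin S i j /\ v j \notin S i j)).
Proof.
split.
- case=> D [lD dcm]; subst n.
  set v : 'I_#|V| -> V := enum_val.
  have bv : bijective v := enum_val_bij V.
  exists v; split => //.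
  exists (fun i j => [set z | D z (v i) && D (v j) z]).
  set S := (fun i j => _).
  have AB : forall i j, Aset v S i :&: Bset v S j = S i j.
    move=> i j; apply/eqP; rewrite eqEsubset S_sub_AB andbT.
    apply/subsetP => z; rewrite /S /Aset /Bset /Srow /Scol /Tplus /Tminus !inE.
    case/andP => HA HB; apply/andP; split.
      case/orP: HA => [/bigcupP [p _]|/imsetP [b]]; rewrite !inE.
        by case/andP.
      by move=> /existsP [a]; rewrite inE => /andP [_ H] ->.
    case/orP: HB => [/bigcupP [q _]|/imsetP [a]]; rewrite !inE.
      by case/andP.
    by move=> /existsP [b]; rewrite inE => /andP [H _] ->.
  split; last split.
  + split.
      move=> i j x y; rewrite !inE => /andP [x1 x2] /andP [y1 y2] xy.
      rewrite dcm //; rewrite lt0n muln_eq0 negb_or -!lt0n !card_gt0.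
      apply/andP; split; apply/set0Pn.
        by exists (v i); rewrite !inE x1 y1.
      by exists (v j); rewrite !inE x2 y2.
    move=> x y xy; rewrite dcm //.
    have -> : [set p : 'I_#|V| * 'I_#|V| | (x \in S p.1 p.2) && (y \in S p.1 p.2)]
      = setX [set i | D x (v i) && D y (v i)] [set j | D (v j) x && D (v j) y].
      apply/setP => [[i j]]; rewrite !inE /=.
      by case: (D x (v i)); case: (D y (v i)); case: (D (v j) x); case: (D (v j) y).
    rewrite cardsX.
    congr (_ * _).
      transitivity #|[set z | D x z && D y z]|; last by apply: eq_card => z; rewrite !inE.
      symmetry; apply: etrans (@card_bij_pre _ _ _ (fun z => D x z && D y z) bv) _.
      by apply: eq_card => z; rewrite !inE.
    transitivity #|[set z | D z x && D z y]|; last by apply: eq_card => z; rewrite !inE.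
    symmetry; apply: etrans (@card_bij_pre _ _ _ (fun z => D z x && D z y) bv) _.
    by apply: eq_card => z; rewrite !inE.
  + by move=> i j _; apply: AB.
  + move=> i j; rewrite !inE (negbTE (lD (v i))) (negbTE (lD (v j))) andbF.
    by [].
- case=> v [bv [S [[_ cnt] [HI HII]]]].
  have vinj := bij_inj bv.
  case: (bv) => w vw wv.
  exists (fun x y => x \in Aset v S (w y)); split.
  + move=> x; rewrite -{1}(wv x); set i := w x.
    rewrite /Aset /Srow /Tplus !inE; apply/negP; case/orP.
      by case/bigcupP => p _ H; case: (HII i p) => /negP.
    case/imsetP => b; rewrite inE => /existsP [a H] /vinj E.
    by move: H; rewrite E => H; case: (HII a b) => _ /negP [].
  + move=> x y xy; rewrite -cnt //.
    have -> : [set p : 'I_n * 'I_n | (x \in S p.1 p.2) && (y \in S p.1 p.2)]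
      = setX [set i | (x \in Aset v S i) && (y \in Aset v S i)]
             [set j | (x \in Bset v S j) && (y \in Bset v S j)].
      apply/setP => [[i j]]; rewrite !inE /=.
      apply/idP/idP.
        case/andP => xS yS.
        have := subsetP (@S_sub_AB _ _ v S i j) x xS; rewrite !inE => /andP [-> ->].
        by have := subsetP (@S_sub_AB _ _ v S i j) y yS; rewrite !inE => /andP [-> ->].
      case/andP => /andP [xA yA] /andP [xB yB].
      have xAB : x \in Aset v S i :&: Bset v S j by rewrite !inE xA xB.
      have yAB : y \in Aset v S i :&: Bset v S j by rewrite !inE yA yB.
      have H2 : 2 <= #|Aset v S i :&: Bset v S j|.
        have <- : #|[set x; y]| = 2 by rewrite cards2 xy.
        by apply: subset_leq_card; apply/subsetP => z /set2P [] ->.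
      by rewrite -(HI i j H2) xAB yAB.
    rewrite cardsX; congr (_ * _).
      transitivity #|[set z | (x \in Aset v S (w z)) && (y \in Aset v S (w z))]|; last by apply: eq_card => z; rewrite !inE.
      symmetry; apply: etrans (@card_bij_pre _ _ _ (fun z => (x \in Aset v S (w z)) && (y \in Aset v S (w z))) bv) _.
      by apply: eq_card => z; rewrite !inE vw.
    transitivity #|[set z | (z \in Aset v S (w x)) && (z \in Aset v S (w y))]|; last by apply: eq_card => z; rewrite !inE.
    symmetry; apply: etrans (@card_bij_pre _ _ _ (fun z => (z \in Aset v S (w x)) && (z \in Aset v S (w y))) bv) _.
    apply: eq_card => z; rewrite [LHS]in_set [RHS]in_set.
    by rewrite -{1}(wv x) -{1}(wv y) !(@AB_sym _ _ v S _ _ vinj) !wv.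
Qed.
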